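(* For each $n$, let $A^{(n)}$ be a clustering of $\{1,\dots,n\}$, let $s^{(n)}$ be a cluster-size specification of $n$ elements, let $B^{(n)}\sim\mathcal C(s^{(n)})$, and let $N_{11}^{(n)}$ be the number of unordered pairs of distinct elements lying in a common cluster of both $A^{(n)}$ and $B^{(n)}$. Then $\operatorname{Var}(N_{11}^{(n)})=o(n^4)$ as $n\to\infty$; consequently $N_{11}^{(n)}/N-m_Am_B/N^2\to0$ in probability, where $N=\binom n2$ and $m_A,m_B$ are the numbers of intra-cluster pairs of $A^{(n)}$ and $B^{(n)}$.
   Context: A clustering is a partition into nonempty clusters; an intra-cluster pair is a pair of distinct elements in the same cluster. For a multiset $s$ of positive integers summing to $n$, $\mathcal C(s)$ is the uniform distribution over clusterings of $\{1,\dots,n\}$ whose multiset of cluster sizes is $s$. *)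

(* Defs.v *)
From HB Require Import structures.
From mathcomp Require Import all_boot all_order all_algebra.
Set Implicit Arguments. Unset Strict Implicit. Unset Printing Implicit Defensive.
Import Order.TTheory GRing.Theory Num.Theory.

(* A clustering of {1..n} (modelled as 'I_n) is a partition of the whole
   set into nonempty blocks (finset's [partition], which excludes set0). *)
Definition clustering (n : nat) (P : {set {set 'I_n}}) : bool :=
  partition P [set: 'I_n].

(* multiset of cluster sizes, as a sequence (compared up to permutation) *)
Definition cluster_sizes (n : nat) (P : {set {set 'I_n}}) : seq nat :=
  map (fun C : {set 'I_n} => #|C|) (enum P).

Definition size_spec (n : nat) (s : seq nat) : bool :=
  all (fun k => 0 < k) s && (sumn s == n).

(* support of the uniform distribution C(s) *)
Definition Cs (n : nat) (s : seq nat) : {set {set {set 'I_n}}} :=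
  [set P | clustering P & perm_eq (cluster_sizes P) s].

Definition same_cluster (n : nat) (P : {set {set 'I_n}}) (x y : 'I_n) : bool :=
  [exists C in P, (x \in C) && (y \in C)].

Definition intra_pairs (n : nat) (P : {set {set 'I_n}}) : nat :=
  #|[set p : 'I_n * 'I_n | (p.1 < p.2)%N & same_cluster P p.1 p.2]|.

Definition N11 (n : nat) (A B : {set {set 'I_n}}) : nat :=
  #|[set p : 'I_n * 'I_n |
      [&& (p.1 < p.2)%N, same_cluster A p.1 p.2 & same_cluster B p.1 p.2]]|.

Local Open Scope ring_scope.

Definition expect (n : nat) (s : seq nat) (f : {set {set 'I_n}} -> rat) : rat :=
  (\sum_(B in Cs n s) f B) / #|Cs n s|%:R.

Definition prob (n : nat) (s : seq nat) (E : pred {set {set 'I_n}}) : rat :=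
  #|[set B in Cs n s | E B]|%:R / #|Cs n s|%:R.

Definition varN11 (n : nat) (A : {set {set 'I_n}}) (s : seq nat) : rat :=
  expect s (fun B => ((N11 A B)%:R - expect s (fun B' => (N11 A B')%:R)) ^+ 2).

Definition stat (n : nat) (A B : {set {set 'I_n}}) : rat :=
  let N : rat := ('C(n, 2))%:R in
  (N11 A B)%:R / N - (intra_pairs A)%:R * (intra_pairs B)%:R / N ^+ 2.

(* Main.v *)
Require Import Defs.
From HB Require Import structures.
From mathcomp Require Import all_boot all_order all_algebra all_fingroup all_solvable.
From mathcomp Require Import zify ring lra.
Set Implicit Arguments. Unset Strict Implicit. Unset Printing Implicit Defensive.
Import Order.TTheory GRing.Theory Num.Theory.

Section Sym.
Variable n : nat.
Notation T := 'I_n.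

Definition act (g : {perm T}) (P : {set {set T}}) : {set {set T}} :=
  [set (fun x => g x) @: (C : {set T}) | C in P].

Lemma actK g : cancel (act g) (act g^-1).
Proof.
move=> P; rewrite /act -imset_comp.
rewrite -[RHS]imset_id; apply: eq_imset => C /=.
rewrite -imset_comp -[RHS]imset_id; apply: eq_imset => x /=.
by rewrite permK.
Qed.

Lemma act_inj g : injective (act g).
Proof. exact: can_inj (actK g). Qed.

Lemma same_cluster_act g P x y :
  same_cluster (act g P) (g x) (g y) = same_cluster P x y.
Proof.
apply/existsP/existsP => [[C /andP[/imsetP[C' C'P ->] /andP[xC yC]]]|[C /andP[CP /andP[xC yC]]]].
  exists C'; rewrite C'P !(mem_imset _ _ (@perm_inj _ g)) in xC yC *; by rewrite xC yC.
exists ((fun x => g x) @: C); rewrite imset_f //= !(mem_imset _ _ (@perm_inj _ g)).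
by rewrite xC yC.
Qed.

Lemma perm_map_enum_imset (A B : finType) (h : A -> B) (F : B -> nat) (P : {set A}) :
  injective h -> perm_eq (map F (enum (h @: P))) (map (F \o h) (enum P)).
Proof.
move=> hi; rewrite map_comp; apply: perm_map.
apply: uniq_perm.
- exact: enum_uniq.
- rewrite map_inj_uniq //; exact: enum_uniq.
move=> y; rewrite mem_enum.
apply/imsetP/mapP.
- by move=> [x xP yx]; exists x => //; rewrite mem_enum.
- by move=> [x xP yx]; exists x => //; move: xP; rewrite mem_enum.
Qed.

Lemma act_Cs g s P : P \in Cs n s -> act g P \in Cs n s.
Proof.
rewrite !inE => /andP[cP pP]; apply/andP; split.
  rewrite /clustering /act.
  have -> : [set: T] = [set g x | x in [set: T]].
    by apply/setP => x; rewrite inE; apply/esym/imsetP; exists ((g^-1)%g x); rewrite ?inE ?permKV.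
  by rewrite imset_partition //; exact: perm_inj.
apply: perm_trans pP; rewrite /cluster_sizes /act.
apply: perm_trans (perm_map_enum_imset _ _ (imset_inj (@perm_inj _ g))) _.
rewrite (eq_map (g := fun C : {set T} => #|C|)) //.
by move=> C /=; rewrite card_imset //; exact: perm_inj.
Qed.
End Sym.

Section Sym2.
Variable n : nat.
Notation T := 'I_n.

Lemma sum_act (F : {set {set T}} -> nat) g s :
  \sum_(B in Cs n s) F (act g B) = \sum_(B in Cs n s) F B.
Proof.
rewrite -(big_imset F (in2W (@act_inj n g))).
have -> // : act g @: Cs n s = Cs n s.
apply/eqP; rewrite eqEcard card_imset ?leqnn ?andbT; last exact: act_inj.
by apply/subsetP => B /imsetP[B' B'S ->]; apply: act_Cs.
Qed.

Lemma trans_tuple k (t t' : k.-tuple T) : uniq t -> uniq t' ->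
  exists g : {perm T}, forall i, g (tnth t i) = tnth t' i.
Proof.
move=> ut ut'.
have kn : k <= #|T|.
  by rewrite -(card_uniq_tuple ut) max_card.
have tr := ntransitive_weak kn (Sym_trans T).
have tD : t \in k.-dtuple(setT) by rewrite inE ut; apply/subsetP=> x; rewrite inE.
have tD' : t' \in k.-dtuple(setT) by rewrite inE ut'; apply/subsetP=> x; rewrite inE.
have [a _ ->] := atransP2 tr tD tD'.
by exists a => i; rewrite tnth_map.
Qed.
End Sym2.
Section Count.
Variable n : nat.
Notation T := 'I_n.

Definition e (B : {set {set T}}) (x y : T) : nat := same_cluster B x y.

Lemma e_sym (B : {set {set T}}) (x y : T) : e B x y = e B y x.
Proof.
rewrite /e /same_cluster; congr nat_of_bool.
by apply/existsP/existsP => -[C /and3P[CB xC yC]]; exists C; rewrite CB xC yC.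
Qed.

Lemma e_le1 (B : {set {set T}}) (x y : T) : e B x y <= 1.
Proof. by rewrite /e; case: (same_cluster _ _ _). Qed.

Lemma sc_pblock (B : {set {set T}}) (x y : T) : clustering B -> same_cluster B x y = (y \in pblock B x).
Proof.
move=> cB; have cov : x \in cover B by rewrite (cover_partition cB) inE.
apply/existsP/idP => [[C /and3P[CB xC yC]]|yP].
  by rewrite (def_pblock (partition_trivIset cB) CB xC).
by exists (pblock B x); rewrite pblock_mem // mem_pblock cov yP.
Qed.

Definition a (B : {set {set T}}) := \sum_(x : T) \sum_(y : T) (x != y) * e B x y.

Lemma a_part (B : {set {set T}}) : clustering B -> a B = \sum_(C in B) #|C| * #|C|.-1.
Proof.
move=> cB; rewrite /a.
have tB := partition_trivIset cB.
transitivity (\sum_(x : T) #|pblock B x|.-1).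
  apply: eq_bigr => x _.
  have xP : x \in pblock B x by rewrite mem_pblock (cover_partition cB) inE.
  rewrite (cardsD1 x (pblock B x)) xP add1n /=.
  rewrite -sum1_card [RHS]big_mkcond /=; apply: eq_bigr => y _.
  by rewrite /e sc_pblock // !inE eq_sym; case: (y == x); case: (y \in _).
rewrite (eq_bigl (fun x => x \in [set: T])); last by move=> x; rewrite inE.
rewrite (set_partition_big _ cB); apply: eq_bigr => C CB.
rewrite -sum_nat_const; apply: eq_bigr => x xC.
by rewrite (def_pblock tB CB xC).
Qed.

Lemma a_Cs s (B : {set {set T}}) : B \in Cs n s -> a B = \sum_(k <- s) k * k.-1.
Proof.
rewrite inE => /andP[cB pB]; rewrite a_part // -big_enum /=.
rewrite -(big_map (fun C : {set T} => #|C|) predT (fun k => k * k.-1)).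
exact: perm_big.
Qed.
End Count.

Section Sym3.
Variable n : nat.
Notation T := 'I_n.
Variable s : seq nat.

Definition cc2 (x y : T) := \sum_(B in Cs n s) e B x y.
Definition cc4 (x y z w : T) := \sum_(B in Cs n s) e B x y * e B z w.

Lemma c2_const x y x' y' : x != y -> x' != y' -> cc2 x y = cc2 x' y'.
Proof.
move=> xy xy'.
have u : uniq [tuple x; y] by rewrite /= inE xy.
have u' : uniq [tuple x'; y'] by rewrite /= inE xy'.
have [g hg] := trans_tuple u u'.
have g0 := hg (@Ordinal 2 0 isT); have g1 := hg (@Ordinal 2 1 isT).
rewrite /tnth /= in g0 g1.
rewrite /cc2 -g0 -g1 -(sum_act (fun B => e B (g x) (g y)) g).
by apply: eq_bigr => B _; rewrite /e same_cluster_act.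
Qed.

Lemma c4_const x y z w x' y' z' w' : uniq [:: w; z; y; x] -> uniq [:: w'; z'; y'; x'] ->
  cc4 x y z w = cc4 x' y' z' w'.
Proof.
move=> u u'.
have [g hg] := trans_tuple (t := [tuple w; z; y; x]) (t' := [tuple w'; z'; y'; x']) u u'.
have g0 := hg (@Ordinal 4 0 isT); have g1 := hg (@Ordinal 4 1 isT).
have g2 := hg (@Ordinal 4 2 isT); have g3 := hg (@Ordinal 4 3 isT).
rewrite /tnth /= in g0 g1 g2 g3.
rewrite /cc4 -g0 -g1 -g2 -g3 -(sum_act (fun B => e B (g x) (g y) * e B (g z) (g w)) g).
by apply: eq_bigr => B _; rewrite /e !same_cluster_act.
Qed.
End Sym3.

Section Sums.
Variable n : nat.
Notation T := 'I_n.

Lemma sum_neq1 (x : T) : \sum_(y : T) (x != y : nat) = n.-1.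
Proof.
have -> : n.-1 = #|predC1 x| by rewrite cardC1 card_ord.
rewrite -sum1_card [RHS]big_mkcond /=.
by apply: eq_bigr => y _; rewrite !inE eq_sym; case: (y == x).
Qed.

Lemma sum_neq : \sum_(x : T) \sum_(y : T) (x != y : nat) = n * n.-1.
Proof.
under eq_bigr => x _ do rewrite sum_neq1.
by rewrite sum_nat_const card_ord.
Qed.

Lemma sum_uniq_cons (l : seq T) : uniq l ->
  \sum_(w : T) (uniq (w :: l) : nat) = n - size l.
Proof.
move=> ul.
have -> : n - size l = #|[predC l]|.
  by rewrite -(card_uniqP ul) -{1}(card_ord n) -(cardC (mem l)) addKn.
rewrite -sum1_card [RHS]big_mkcond /=.
by apply: eq_bigr => w _; rewrite /= ul andbT !inE; case: (w \in l).
Qed.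

Lemma sum_uniq4 : \sum_(x : T) \sum_(y : T) \sum_(z : T) \sum_(w : T)
   (uniq [:: w; z; y; x] : nat) = n * (n.-1 * ((n - 2) * (n - 3))).
Proof.
transitivity (\sum_(x : T) \sum_(y : T) \sum_(z : T) ((uniq [:: z; y; x] : nat) * (n - 3))).
  apply: eq_bigr => x _; apply: eq_bigr => y _; apply: eq_bigr => z _.
  case u: (uniq [:: z; y; x]); first by rewrite sum_uniq_cons // mul1n.
  by rewrite mul0n big1 // => w _; rewrite cons_uniq u andbF.
under eq_bigr => x _ do under eq_bigr => y _ do rewrite -big_distrl.
transitivity (\sum_(x : T) \sum_(y : T) ((uniq [:: y; x] : nat) * (n - 2) * (n - 3))).
  apply: eq_bigr => x _; apply: eq_bigr => y _; congr (_ * _).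
  case u: (uniq [:: y; x]); first by rewrite sum_uniq_cons // mul1n.
  by rewrite mul0n big1 // => w _; rewrite cons_uniq u andbF.
under eq_bigr => x _ do rewrite -big_distrl -big_distrl.
transitivity (\sum_(x : T) (n.-1 * (n - 2) * (n - 3))).
  apply: eq_bigr => x _; congr (_ * _ * _).
  rewrite (eq_bigr (fun y => (x != y : nat))) ?sum_neq1 // => y _.
  by rewrite /= inE andbT eq_sym.
by rewrite sum_nat_const card_ord !mulnA.
Qed.

Lemma exch2 (I J : finType) (P : pred I) (F : I -> J -> J -> nat) :
  \sum_(i | P i) \sum_(x : J) \sum_(y : J) F i x y =
  \sum_(x : J) \sum_(y : J) \sum_(i | P i) F i x y.
Proof.
rewrite exchange_big; apply: eq_bigr => x _; exact: exchange_big.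
Qed.

Lemma exch4 (I J : finType) (P : pred I) (F : I -> J -> J -> J -> J -> nat) :
  \sum_(i | P i) \sum_(x : J) \sum_(y : J) \sum_(z : J) \sum_(w : J) F i x y z w =
  \sum_(x : J) \sum_(y : J) \sum_(z : J) \sum_(w : J) \sum_(i | P i) F i x y z w.
Proof.
rewrite exch2; apply: eq_bigr => x _; apply: eq_bigr => y _; exact: exch2.
Qed.

Lemma mul4 (J : finType) (f g : J -> J -> nat) :
  (\sum_(x : J) \sum_(y : J) f x y) * (\sum_(z : J) \sum_(w : J) g z w) =
  \sum_(x : J) \sum_(y : J) \sum_(z : J) \sum_(w : J) f x y * g z w.
Proof.
rewrite big_distrl; apply: eq_bigr => x _; rewrite big_distrl; apply: eq_bigr => y _.
rewrite big_distrr; apply: eq_bigr => z _; by rewrite big_distrr.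
Qed.

Lemma card_pairs (P : T -> T -> bool) :
  #|[set p : T * T | P p.1 p.2]| = \sum_(x : T) \sum_(y : T) (P x y : nat).
Proof.
rewrite cardsE -sum1_card big_mkcond /= pair_big /=.
by apply: eq_bigr => i _; rewrite unfold_in; case: (P _ _).
Qed.
End Sums.

Section Facts.
Variable n : nat.
Notation T := 'I_n.
Variable s : seq nat.
Variable A : {set {set T}}.

Definition wA (x y : T) : nat := (x < y) && same_cluster A x y.
Definition U (x y z w : T) : nat := uniq [:: w; z; y; x].

Lemma uniq4_neq (x y z w : T) : uniq [:: w; z; y; x] -> (x != y) && (z != w).
Proof.
rewrite /= !inE !negb_or.
case: (x =P y) => [->|_]; first by rewrite ?eqxx ?andbF ?andFb.
case: (z =P w) => [->|_]; first by rewrite ?eqxx ?andbF ?andFb.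
done.
Qed.

Lemma X_sum (B : {set {set T}}) : N11 A B = \sum_(x : T) \sum_(y : T) wA x y * e B x y.
Proof.
rewrite /N11 (card_pairs (fun x y => [&& x < y, same_cluster A x y & same_cluster B x y])).
apply: eq_bigr => x _; apply: eq_bigr => y _; rewrite /wA /e.
by case: (x < y); case: (same_cluster A x y); case: (same_cluster B x y).
Qed.

Lemma mA_sum : intra_pairs A = \sum_(x : T) \sum_(y : T) wA x y.
Proof. by rewrite /intra_pairs (card_pairs (fun x y => (x < y) && same_cluster A x y)). Qed.

Lemma intra_a (B : {set {set T}}) : 2 * intra_pairs B = a B.
Proof.
rewrite /intra_pairs (card_pairs (fun x y => (x < y) && same_cluster B x y)) /a.
have -> : \sum_(x : T) \sum_(y : T) (x != y) * e B x y =
  \sum_(x : T) \sum_(y : T) ((x < y) * e B x y) + \sum_(x : T) \sum_(y : T) ((y < x) * e B x y).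
  rewrite -big_split; apply: eq_bigr => x _; rewrite -big_split; apply: eq_bigr => y _.
  rewrite -[x != y]/(val x != val y) neq_ltn /=.
  by case: ltngtP => _; rewrite /= ?mul0n ?mul1n ?addn0.
rewrite [X in _ + X]exchange_big /=.
under [X in _ + X]eq_bigr => y _ do under eq_bigr => x _ do rewrite e_sym.
rewrite mul2n -addnn.
by congr (_ + _); apply: eq_bigr => x _; apply: eq_bigr => y _;
  rewrite /e; case: (x < y); rewrite ?mul1n ?mul0n.
Qed.

Lemma a_le (B : {set {set T}}) : a B <= n * n.-1.
Proof.
rewrite -sum_neq; apply: leq_sum => x _; apply: leq_sum => y _.
by rewrite -[X in _ <= X]muln1 leq_mul2l e_le1 orbT.
Qed.

Lemma wA_le x y : wA x y <= (x != y).
Proof.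
rewrite /wA -[x != y]/(val x != val y) neq_ltn.
by case: (x < y) => /=; case: (same_cluster A x y).
Qed.

Lemma mA_le : intra_pairs A <= n * n.-1.
Proof.
rewrite mA_sum -sum_neq; apply: leq_sum => x _; apply: leq_sum => y _; exact: wA_le.
Qed.

Notation S := (Cs n s).
Notation K := #|Cs n s|.
Variables (a0 : nat) (ha0 : forall B, B \in S -> a B = a0).
Variables (x0 y0 : T) (xy0 : x0 != y0).
Variables (x1 y1 z1 w1 : T) (u1 : uniq [:: w1; z1; y1; x1]).

Lemma F1 : K * a0 = cc2 s x0 y0 * (n * n.-1).
Proof.
transitivity (\sum_(B in S) a B).
  by rewrite -sum_nat_const; apply: eq_bigr => B BS; rewrite ha0.
rewrite /a exch2 -sum_neq big_distrr /=; apply: eq_bigr => x _.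
rewrite big_distrr /=; apply: eq_bigr => y _.
rewrite -big_distrr /= -/(cc2 s x y) mulnC.
case xy: (x != y); last by rewrite ?mul0n ?muln0.
by rewrite (c2_const s xy xy0).
Qed.

Lemma F2 : cc4 s x1 y1 z1 w1 * (n * (n.-1 * ((n - 2) * (n - 3)))) <= K * (a0 * a0).
Proof.
rewrite -sum_uniq4 big_distrr /=.
have -> : \sum_(x : T) cc4 s x1 y1 z1 w1 * (\sum_(y : T) \sum_(z : T) \sum_(w : T) (uniq [:: w; z; y; x] : nat)) =
  \sum_(x : T) \sum_(y : T) \sum_(z : T) \sum_(w : T) (U x y z w * cc4 s x y z w).
  apply: eq_bigr => x _; rewrite big_distrr; apply: eq_bigr => y _.
  rewrite big_distrr; apply: eq_bigr => z _; rewrite big_distrr; apply: eq_bigr => w _.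
  change (cc4 s x1 y1 z1 w1 * uniq [:: w; z; y; x] = U x y z w * cc4 s x y z w).
  rewrite /U; case u: (uniq _); last by rewrite muln0 mul0n.
  by rewrite (c4_const s u1 u) mulnC.
have -> : K * (a0 * a0) = \sum_(B in S) \sum_(x : T) \sum_(y : T) \sum_(z : T) \sum_(w : T)
     ((x != y) * e B x y) * ((z != w) * e B z w).
  rewrite -sum_nat_const; apply: eq_bigr => B BS; rewrite -(ha0 BS) /a mul4 //.
rewrite exch4; apply: leq_sum => x _; apply: leq_sum => y _; apply: leq_sum => z _.
apply: leq_sum => w _; rewrite /cc4 big_distrr /=; apply: leq_sum => B _.
rewrite /U; case u: (uniq _); last by rewrite mul0n.
by have /andP[-> ->] := uniq4_neq u; rewrite !mul1n.
Qed.

Definition O4 (x y z w : T) : nat := [&& x != y, z != w & ~~ uniq [:: w; z; y; x]].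

Lemma F3a : \sum_(x : T) \sum_(y : T) \sum_(z : T) \sum_(w : T) O4 x y z w
   + n * (n.-1 * ((n - 2) * (n - 3))) = (n * n.-1) * (n * n.-1).
Proof.
rewrite -sum_uniq4 -sum_neq mul4 -big_split; apply: eq_bigr => x _.
rewrite -big_split; apply: eq_bigr => y _.
rewrite -big_split; apply: eq_bigr => z _.
rewrite -big_split; apply: eq_bigr => w _.
rewrite /O4; case u: (uniq _).
  by have /andP[-> ->] := uniq4_neq u; rewrite andbF.
by case: (x != y); case: (z != w).
Qed.

Lemma c4_le (x y z w : T) : cc4 s x y z w <= K.
Proof.
rewrite /cc4 -sum1_card; apply: leq_sum => B _.
by rewrite -[1]muln1 leq_mul ?e_le1.
Qed.

Lemma F3 : \sum_(B in S) N11 A B * N11 A B <=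
   intra_pairs A * intra_pairs A * cc4 s x1 y1 z1 w1
   + K * \sum_(x : T) \sum_(y : T) \sum_(z : T) \sum_(w : T) O4 x y z w.
Proof.
under eq_bigr => B _ do rewrite X_sum mul4.
rewrite exch4 mA_sum mul4 big_distrl big_distrr -big_split /=; apply: leq_sum => x _.
rewrite big_distrl big_distrr -big_split /=; apply: leq_sum => y _.
rewrite big_distrl big_distrr -big_split /=; apply: leq_sum => z _.
rewrite big_distrl big_distrr -big_split /=; apply: leq_sum => w _.
have -> : \sum_(i in S) wA x y * e i x y * (wA z w * e i z w) = wA x y * wA z w * cc4 s x y z w.
  rewrite /cc4 big_distrr; apply: eq_bigr => B _; rewrite /=.
  by rewrite mulnA -(mulnA (wA x y)) (mulnC (e B x y)) !mulnA.
have hx := wA_le x y; have hz := wA_le z w.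
rewrite /wA in hx hz *.
case: ((x < y) && same_cluster A x y) hx => /= hx; last by rewrite !mul0n.
case: ((z < w) && same_cluster A z w) hz => /= hz; last by rewrite muln0 !mul0n.
rewrite !mul1n.
have {}hx : x != y by move: hx; case: (x != y).
have {}hz : z != w by move: hz; case: (z != w).
case u: (uniq [:: w; z; y; x]).
  by rewrite (c4_const s u u1) leq_addr.
by rewrite /O4 hx hz u muln1 (leq_trans (c4_le _ _ _ _)) // leq_addl.
Qed.

Lemma F4 : \sum_(B in S) N11 A B = intra_pairs A * cc2 s x0 y0.
Proof.
under eq_bigr => B _ do rewrite X_sum.
rewrite exch2 mA_sum big_distrl; apply: eq_bigr => x _.
rewrite big_distrl; apply: eq_bigr => y _.
rewrite -big_distrr /= -/(cc2 s x y).
have := wA_le x y; rewrite /wA; case: ((x < y) && same_cluster A x y) => /= h; last by rewrite !mul0n.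
have xy : x != y by move: h; case: (x != y).
by rewrite (c2_const s xy xy0).
Qed.
End Facts.

Lemma arith (SX2 K q d O mA a0 c4 : nat) : SX2 <= mA*mA*c4 + K*O -> c4*q <= K*(a0*a0) ->
  O + q = d*d -> mA*a0 <= d*d -> d*d <= 2*q ->
  SX2*K*q*(d*d) <= 3*O*q*(K*K)*(d*d) + (mA*mA)*(K*K)*(a0*a0)*q.
Proof.
move=> h1 h2 h3 h4 h5.
have s1 : SX2*K*q*(d*d) <= (mA*mA*c4 + K*O)*K*q*(d*d) by rewrite !leq_mul2r h1 !orbT.
apply: leq_trans s1 _.
have e1 : (mA*mA*c4 + K*O)*K*q*(d*d) = (mA*mA)*(c4*q)*K*(d*d) + (K*K)*O*q*(d*d) by ring.
rewrite e1.
have s2 : (mA*mA)*(c4*q)*K*(d*d) <= (mA*mA)*(K*(a0*a0))*K*(d*d).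
  by rewrite leq_mul2r leq_mul2r leq_mul2l h2 !orbT.
apply: leq_trans (leq_add s2 (leqnn _)) _.
have e2 : (mA*mA)*(K*(a0*a0))*K*(d*d) = (K*K)*((mA*a0)*(mA*a0))*q + (K*K)*((mA*a0)*(mA*a0))*O.
  by rewrite -h3; ring.
rewrite e2.
have s3 : (mA*a0)*(mA*a0) <= 2*q*(d*d).
  apply: leq_trans (leq_mul h4 h4) _; exact: leq_mul.
have s4 : (K*K)*((mA*a0)*(mA*a0))*O <= (K*K)*(2*q*(d*d))*O.
  by rewrite leq_mul2r leq_mul2l s3 !orbT.
have e3 : 3*O*q*(K*K)*(d*d) + (mA*mA)*(K*K)*(a0*a0)*q =
   (K*K)*((mA*a0)*(mA*a0))*q + (K*K)*(2*q*(d*d))*O + (K*K)*O*q*(d*d) by ring.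
rewrite e3; apply: leq_add => //; exact: leq_add.
Qed.


Lemma O_bound n : (8 <= n)%N ->
  forall O, (O + n * (n.-1 * ((n - 2) * (n - 3))) = (n * n.-1) * (n * n.-1))%N ->
  (O <= 4 * (n * n * n))%N /\ ((n * n.-1) * (n * n.-1) <= 2 * (n * (n.-1 * ((n - 2) * (n - 3)))))%N.
Proof.
move=> n8.
have [m ->] : exists m, n = (m + 8)%N by exists (n - 8)%N; lia.
move=> O hO.
have e1 : ((m + 8).-1 = m + 7)%N by lia.
have e2 : ((m + 8) - 2 = m + 6)%N by lia.
have e3 : ((m + 8) - 3 = m + 5)%N by lia.
rewrite e1 e2 e3 in hO *.
have eq : ((m + 8) * (m + 7) * ((m + 8) * (m + 7)) =
   (m + 8) * ((m + 7) * ((m + 6) * (m + 5))) + (m + 8) * (m + 7) * (4 * m + 26))%N by ring.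
rewrite eq addnC in hO; move/addnI: hO => ->.
have hq : (4 * m + 26 <= (m + 6) * (m + 5))%N by nia.
have h : ((m + 7) * (4 * m + 26) <= 4 * ((m + 8) * (m + 8)))%N by nia.
split.
  have h' := leq_mul (leqnn (m + 8)) h.
  have q1 : ((m + 8) * (m + 7) * (4 * m + 26) = (m + 8) * ((m + 7) * (4 * m + 26)))%N by ring.
  have q2 : ((m + 8) * (4 * ((m + 8) * (m + 8))) = 4 * ((m + 8) * (m + 8) * (m + 8)))%N by ring.
  by rewrite q1 -q2.
rewrite eq mul2n -addnn leq_add2l.
have h' := leq_mul (leqnn ((m + 8) * (m + 7))) hq.
have q3 : ((m + 8) * ((m + 7) * ((m + 6) * (m + 5))) = (m + 8) * (m + 7) * ((m + 6) * (m + 5)))%N by ring.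
by rewrite q3.
Qed.

Lemma natC n : (8 <= n)%N -> (n * n <= 4 * 'C(n, 2))%N /\ (0 < 'C(n, 2))%N.
Proof.
move=> n8.
have N2 : (2 * 'C(n, 2) = n * n.-1)%N by rewrite -[in RHS](bin1 n.-1) mul_bin_diag.
split; last by rewrite bin_gt0; lia.
have -> : (4 * 'C(n, 2) = n * (2 * n.-1))%N by rewrite mulnCA -N2; ring.
by rewrite leq_mul2l; apply/orP; right; lia.
Qed.


Local Open Scope ring_scope.


Lemma var_expand (I : finType) (P : {set I}) (f : I -> rat) :
  (0 < #|P|)%N ->
  \sum_(i in P) (f i - (\sum_(j in P) f j) / #|P|%:R) ^+ 2 =
  \sum_(i in P) f i ^+ 2 - (\sum_(j in P) f j) ^+ 2 / #|P|%:R.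
Proof.
move=> Kp; set S := \sum_(j in P) f j; set K := #|P|%:R.
have K0 : K != 0 by rewrite pnatr_eq0 -lt0n.
have -> : \sum_(i in P) (f i - S / K) ^+ 2 =
   \sum_(i in P) f i ^+ 2 - (2 * (S / K)) * S + K * (S / K) ^+ 2.
  rewrite (eq_bigr (fun i => f i ^+ 2 - (2 * (S / K)) * f i + (S / K) ^+ 2)); last first.
    by move=> i _; ring.
  rewrite big_split /= sumrB -mulr_sumr sumr_const /K; congr (_ - _ + _).
  by rewrite mulr_natl.
by field.
Qed.

Lemma cheb (I : finType) (P : {set I}) (bad : pred I) (g : I -> rat) (c : rat) :
  0 <= c -> (forall i, i \in P -> bad i -> c < g i) -> (forall i, i \in P -> 0 <= g i) ->
  #|[set i in P | bad i]|%:R * c <= \sum_(i in P) g i.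
Proof.
move=> c0 hb hg.
have -> : #|[set i in P | bad i]|%:R * c = \sum_(i in [set i in P | bad i]) c.
  by rewrite sumr_const mulr_natl.
rewrite big_mkcond [X in _ <= X]big_mkcond /=.
apply: ler_sum => i _; rewrite inE.
case iP: (i \in P) => //=; case bi: (bad i) => //=.
  by apply: ltW; apply: hb.
exact: hg.
Qed.


Lemma main_n n s (A : {set {set 'I_n}}) : (8 <= n)%N ->
  varN11 A s <= 12%:R * n%:R ^+ 3 /\
  (forall eps : rat, 0 < eps ->
     prob s (fun B => eps < `|stat A B|) <= 12%:R * n%:R ^+ 3 / (eps * ('C(n, 2))%:R) ^+ 2).
Proof.
move=> n8.
case: (posnP #|Cs n s|) => [K0|Kp].
  split.
    by rewrite /varN11 /expect K0 !invr0 !mulr0 mulr_ge0 ?exprn_ge0 ?ler0n.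
  move=> eps _; rewrite /prob K0 invr0 mulr0.
  apply: mulr_ge0; last by rewrite invr_ge0 sqr_ge0.
  by apply: mulr_ge0; [|apply: exprn_ge0]; apply: ler0n.
have /card_gt0P [B0 B0S] := Kp.
pose a0 := a B0.
have ha0 : forall B, B \in Cs n s -> a B = a0 by move=> B BS; rewrite /a0 (a_Cs BS) (a_Cs B0S).
have h0 : (0 < n)%N by lia. have h1 : (1 < n)%N by lia.
have h2 : (2 < n)%N by lia. have h3 : (3 < n)%N by lia.
pose x0 := Ordinal h0; pose y0 := Ordinal h1; pose z0 := Ordinal h2; pose w0 := Ordinal h3.
have xy0 : x0 != y0 by [].
have u1 : uniq [:: w0; z0; y0; x0] by [].
have f1 := F1 ha0 xy0.
have f2 := F2 ha0 u1.
have f3 := F3 s A u1.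
have f3a := F3a n.
have f4 := F4 s A xy0.
have hmA := mA_le A.
have ha0d : (a0 <= n * n.-1)%N by apply: a_le.
set K := #|Cs n s| in f1 f2 f3 Kp.
set SX2 := (\sum_(B in Cs n s) N11 A B * N11 A B)%N in f3.
set SX := (\sum_(B in Cs n s) N11 A B)%N in f4.
set O := (\sum_(x : 'I_n) \sum_(y : 'I_n) \sum_(z : 'I_n) \sum_(w : 'I_n) O4 x y z w)%N in f3 f3a.
set mA := intra_pairs A in f3 f4 hmA.
set c2 := cc2 s x0 y0 in f1 f4.
set c4 := cc4 s w0 z0 y0 x0 in f2 f3.
set d := (n * n.-1)%N in f1 f3a hmA ha0d.
set q := (n * (n.-1 * ((n - 2) * (n - 3))))%N in f2 f3a.
have [hOb hdq] := O_bound n8 f3a.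
have R := arith f3 f2 f3a (leq_mul hmA ha0d) hdq.
have hv : varN11 A s = (SX2%:R - SX%:R ^+ 2 / K%:R) / K%:R.
  rewrite /varN11 /expect (var_expand (fun B => (N11 A B)%:R) Kp).
  rewrite /SX /SX2 !natr_sum; congr (_ / _); congr (_ - _ / _).
  by apply: eq_bigr => B _; rewrite natrM expr2.
have dpos : (0 < d)%N by rewrite /d muln_gt0; apply/andP; split; lia.
have qpos : (0 < q)%N by rewrite /q !muln_gt0; apply/and4P; split; lia.
have dr0 : d%:R != 0 :> rat by rewrite pnatr_eq0 -lt0n.
have qr0 : q%:R != 0 :> rat by rewrite pnatr_eq0 -lt0n.
have Kr0 : K%:R != 0 :> rat by rewrite pnatr_eq0 -lt0n.
have f1r : K%:R * a0%:R = c2%:R * d%:R :> rat by rewrite -!natrM f1.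
have c2e : c2%:R = K%:R * a0%:R / d%:R :> rat by rewrite f1r mulfK.
have Rr : SX2%:R * K%:R * q%:R * (d%:R * d%:R) <=
    3 * O%:R * q%:R * (K%:R * K%:R) * (d%:R * d%:R) + mA%:R * mA%:R * (K%:R * K%:R) * (a0%:R * a0%:R) * q%:R :> rat.
  by move: R; rewrite -(ler_nat rat) !natrD !natrM.
have hvb : varN11 A s <= 3 * O%:R.
  rewrite hv f4 natrM c2e ler_pdivrMr ?ltr0n //.
  have qdd : 0 < K%:R * q%:R * (d%:R * d%:R) :> rat by rewrite !mulr_gt0 ?ltr0n.
  rewrite -(ler_pM2r qdd).
  have E : (SX2%:R - (mA%:R * (K%:R * a0%:R / d%:R)) ^+ 2 / K%:R) * (K%:R * q%:R * (d%:R * d%:R))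
     = SX2%:R * K%:R * q%:R * (d%:R * d%:R) - mA%:R * mA%:R * (K%:R * K%:R) * (a0%:R * a0%:R) * q%:R :> rat.
    by field; rewrite Kr0 dr0.
  have E2 : 3 * O%:R * K%:R * (K%:R * q%:R * (d%:R * d%:R)) =
      3 * O%:R * q%:R * (K%:R * K%:R) * (d%:R * d%:R) :> rat by ring.
  by rewrite E E2 lerBlDr.
have e12 : (12 * (n * n * n))%:R = 12 * n%:R ^+ 3 :> rat by rewrite !natrM; ring.
have hv12 : varN11 A s <= 12 * n%:R ^+ 3.
  apply: le_trans hvb _; rewrite -e12.
  have h12 : (3 * O <= 12 * (n * n * n))%N by lia.
  by move: h12; rewrite -(ler_nat rat) natrM.
split => // eps eps0.
have N2 : (2 * 'C(n, 2) = d)%N by rewrite /d -[in RHS](bin1 n.-1) mul_bin_diag.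
have Nr : ('C(n, 2))%:R = d%:R / 2 :> rat.
  by rewrite -N2 natrM; field.
have Npos : 0 < ('C(n, 2))%:R :> rat by rewrite Nr divr_gt0 ?ltr0n.
have statE : forall B, B \in Cs n s ->
   stat A B = ((N11 A B)%:R - SX%:R / K%:R) / ('C(n, 2))%:R.
  move=> B BS; rewrite /stat /=.
  have mB : (intra_pairs B)%:R = a0%:R / 2 :> rat.
    by rewrite -(ha0 B BS) -intra_a natrM; field.
  rewrite mB Nr f4 natrM c2e; field.
  by rewrite Kr0 dr0.
have Vg : varN11 A s = (\sum_(B in Cs n s) ((N11 A B)%:R - SX%:R / K%:R) ^+ 2) / K%:R.
  by rewrite /varN11 /expect /SX natr_sum.
have ch := cheb (bad := fun B => eps < `|stat A B|)
   (g := fun B => ((N11 A B)%:R - SX%:R / K%:R) ^+ 2) (sqr_ge0 (eps * ('C(n, 2))%:R)).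
have ch' : #|[set B in Cs n s | eps < `|stat A B|]|%:R * (eps * ('C(n, 2))%:R) ^+ 2 <=
    \sum_(B in Cs n s) ((N11 A B)%:R - SX%:R / K%:R) ^+ 2.
  apply: ch; last by move=> B _; apply: sqr_ge0.
  move=> B BS /=; rewrite statE // normf_div (ger0_norm (ltW Npos)) ltr_pdivlMr //.
  move=> hlt; rewrite -[X in _ < X]real_normK ?num_real // ltrXn2r //.
  by apply: mulr_ge0; apply: ltW.
have cpos : 0 < (eps * ('C(n, 2))%:R) ^+ 2 by rewrite exprn_gt0 // mulr_gt0.
rewrite /prob.
apply: (@le_trans _ _ (varN11 A s / (eps * ('C(n, 2))%:R) ^+ 2)); last first.
  by rewrite ler_pM2r ?invr_gt0.
rewrite ler_pdivrMr ?ltr0n // mulrAC ler_pdivlMr // Vg divfK //.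
Qed.


Lemma bound_lt (x : rat) (n : nat) : 0 <= x -> (Num.bound x <= n)%N -> x < n%:R.
Proof.
move=> x0 hb; apply: lt_le_trans (archi_boundP x0) _; by rewrite ler_nat.
Qed.

Theorem mainTheorem6
  (A : forall n : nat, {set {set 'I_n}}) (s : nat -> seq nat)
  (hA : forall n, clustering (A n)) (hs : forall n, size_spec n (s n)) :
  (forall eps : rat, 0 < eps ->
     exists n0 : nat, forall n : nat, (n0 <= n)%N ->
       varN11 (A n) (s n) <= eps * (n%:R) ^+ 4)
  /\
  (forall eps delta : rat, 0 < eps -> 0 < delta ->
     exists n0 : nat, forall n : nat, (n0 <= n)%N ->
       prob (s n) (fun B => eps < `|stat (A n) B|) <= delta).
Proof.
split.
  move=> eps eps0; exists (maxn 8 (Num.bound (12 / eps))) => n hn.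
  have n8 : (8 <= n)%N by apply: leq_trans hn; apply: leq_maxl.
  have hb : 12 / eps < n%:R.
    apply: bound_lt; first by apply: divr_ge0; [by [] | exact: ltW].
    by apply: leq_trans hn; apply: leq_maxr.
  have [hv _] := main_n (s n) (A n) n8; apply: le_trans hv _.
  have npos : 0 < n%:R :> rat by rewrite ltr0n; apply: leq_trans n8.
  rewrite ltr_pdivrMr // in hb.
  have e : eps * n%:R ^+ 4 = (n%:R * eps) * n%:R ^+ 3 by ring.
  by rewrite e ler_pM2r ?exprn_gt0 // ltW.
move=> eps delta eps0 delta0.
exists (maxn 8 (Num.bound (192 / (eps ^+ 2 * delta)))) => n hn.
have n8 : (8 <= n)%N by apply: leq_trans hn; apply: leq_maxl.
have t0 : 0 < eps ^+ 2 * delta by rewrite mulr_gt0 ?exprn_gt0.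
have hb : 192 / (eps ^+ 2 * delta) < n%:R.
  apply: bound_lt; first by apply: divr_ge0; [by [] | exact: ltW].
  by apply: leq_trans hn; apply: leq_maxr.
have [_ hp] := main_n (s n) (A n) n8; apply: le_trans (hp eps eps0) _.
have npos : 0 < n%:R :> rat by rewrite ltr0n; apply: leq_trans n8.
rewrite (ltr_pdivrMr _ _ t0) in hb.
have [hC hC0] := natC n8.
have hC2 : ((n * n) * (n * n) <= (4 * 'C(n, 2)) * (4 * 'C(n, 2)))%N by apply: leq_mul.
move: hC2; rewrite -(ler_nat rat) !natrM => hC2.
set Cr := ('C(n, 2))%:R in hC2 *; set nr := n%:R in hC2 hb npos *.
have Cpos : 0 < Cr by rewrite /Cr ltr0n.
have cpos : 0 < (eps * Cr) ^+ 2 by apply: exprn_gt0; apply: mulr_gt0.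
rewrite (ler_pdivrMr _ _ cpos).
have h1 : 192 * nr ^+ 3 <= (nr * (eps ^+ 2 * delta)) * nr ^+ 3.
  rewrite (ler_pM2r (exprn_gt0 3 npos)); exact: ltW.
have h2 : (eps ^+ 2 * delta) * (nr * nr * (nr * nr)) <= (eps ^+ 2 * delta) * (4%:R * Cr * (4%:R * Cr)).
  by rewrite (ler_pM2l t0).
have e1 : (nr * (eps ^+ 2 * delta)) * nr ^+ 3 = (eps ^+ 2 * delta) * (nr * nr * (nr * nr)) by ring.
have e2 : delta * (eps * Cr) ^+ 2 = (eps ^+ 2 * delta) * (4%:R * Cr * (4%:R * Cr)) / 16%:R.
  by field.
have h16 : 0 < 16%:R :> rat by rewrite ltr0n.
rewrite e2 (ler_pdivlMr _ _ h16).
have e3 : 12 * nr ^+ 3 * 16%:R = 192 * nr ^+ 3 by ring.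
rewrite e3; apply: le_trans h1 _; rewrite e1; exact: h2.
Qed.
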